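(* Let $\iota:\emptyset\to\{\bullet\}$; let $m:\{a\}\to\{a,b\}$ be the inclusion of a point into the two-point antidiscrete space; let $\sigma:S\to\{\bullet\}$ be the map from the Sierpinski space $S=\{o,c\}$ (open sets $\emptyset,\{o\},S$) to a point; and let $e:\{a,b\}\to\{\bullet\}$ be the map from the two-point antidiscrete space to a point. Then, in $\mathrm{Top}$, $\{\iota\}^{lrrrr}=\{m,\sigma\}^l=\{e\}^{lr}$, and this is the class of surjective continuous maps $p:A\to B$ such that the topology on $A$ is induced from $B$ (every open subset of $A$ has the form $p^{-1}(V)$ with $V\subseteq B$ open).
   Context: For continuous maps $f:A\to B$, $g:C\to D$, $f\pitchfork g$ means: for all continuous $t:A\to C$, $b:B\to D$ with $g\circ t=b\circ f$ there is continuous $d:B\to C$ with $d\circ f=t$, $g\circ d=b$. For a class $P$, $P^l=\{f: f\pitchfork g\ \forall g\in P\}$, $P^r=\{g: f\pitchfork g\ \forall f\in P\}$; for a word $w$ in $l,r$, $P^w$ applies these operations from left to right. *)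

(* Defs.v *)
From HB Require Import structures.
From mathcomp Require Import all_boot all_order.
From mathcomp Require Import all_classical all_reals all_analysis.

Set Implicit Arguments.
Unset Strict Implicit.
Unset Printing Implicit Defensive.

Local Open Scope classical_set_scope.

Definition mclass := forall (A B : topologicalType), (A -> B) -> Prop.

Definition lifts (A B C D : topologicalType) (f : A -> B) (g : C -> D) : Prop :=
  forall (t : A -> C) (b : B -> D), continuous t -> continuous b ->
    g \o t = b \o f ->
    exists d : B -> C, [/\ continuous d, d \o f = t & g \o d = b].

(** P^l and P^r (morphisms of Top, i.e. continuous maps) *)
Definition lcl (P : mclass) : mclass := fun A B f =>
  continuous f /\
  forall (C D : topologicalType) (g : C -> D), continuous g -> P C D g -> lifts f g.

Definition rcl (P : mclass) : mclass := fun C D g =>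
  continuous g /\
  forall (A B : topologicalType) (f : A -> B), continuous f -> P A B f -> lifts f g.

Definition sing (X Y : topologicalType) (h : X -> Y) : mclass := fun A B f =>
  existT (fun AB : topologicalType * topologicalType => AB.1 -> AB.2) (A, B) f =
  existT (fun AB : topologicalType * topologicalType => AB.1 -> AB.2) (X, Y) h.

Definition pair_cl (X1 Y1 X2 Y2 : topologicalType) (h1 : X1 -> Y1) (h2 : X2 -> Y2)
  : mclass := fun A B f => sing h1 f \/ sing h2 f.

Definition emptysp := void.
HB.instance Definition _ := Choice.on emptysp.
Definition empty_open : set_system emptysp := fun _ => True.
Lemma empty_opT : empty_open setT. Proof. by []. Qed.
Lemma empty_opI : setI_closed empty_open. Proof. by []. Qed.
Lemma empty_op_bigU (I : Type) (f : I -> set emptysp) :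
  (forall i, empty_open (f i)) -> empty_open (\bigcup_i f i).
Proof. by []. Qed.
HB.instance Definition _ :=
  isOpenTopological.Build emptysp empty_opT empty_opI empty_op_bigU.

Definition pointsp := unit.
HB.instance Definition _ := Choice.on pointsp.
Definition point_open : set_system pointsp := fun U => U = set0 \/ U = setT.
Lemma point_opT : point_open setT. Proof. by right. Qed.
Lemma point_opI : setI_closed point_open.
Proof.
move=> U V [->|->] [->|->]; rewrite ?set0I ?setI0 ?setIT ?setTI;
  first [by left|by right].
Qed.
Lemma point_op_bigU (I : Type) (f : I -> set pointsp) :
  (forall i, point_open (f i)) -> point_open (\bigcup_i f i).
Proof.
move=> fo; have [[i fi]|nT] := pselect (exists i, f i = setT).
  by right; apply/seteqP; split=> // x _; exists i => //; rewrite fi.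
left; apply/seteqP; split=> // x [i _ fx]; case: (fo i) => fiE.
  by move: fx; rewrite fiE.
by exfalso; apply: nT; exists i.
Qed.
HB.instance Definition _ :=
  isOpenTopological.Build pointsp point_opT point_opI point_op_bigU.

(* the two-point antidiscrete space {a, b}, with a := true, b := false *)
Definition antidisc2 := bool.
HB.instance Definition _ := Choice.on antidisc2.
Definition anti_open : set_system antidisc2 := fun U => U = set0 \/ U = setT.
Lemma anti_opT : anti_open setT. Proof. by right. Qed.
Lemma anti_opI : setI_closed anti_open.
Proof.
move=> U V [->|->] [->|->]; rewrite ?set0I ?setI0 ?setIT ?setTI;
  first [by left|by right].
Qed.
Lemma anti_op_bigU (I : Type) (f : I -> set antidisc2) :
  (forall i, anti_open (f i)) -> anti_open (\bigcup_i f i).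
Proof.
move=> fo; have [[i fi]|nT] := pselect (exists i, f i = setT).
  by right; apply/seteqP; split=> // x _; exists i => //; rewrite fi.
left; apply/seteqP; split=> // x [i _ fx]; case: (fo i) => fiE.
  by move: fx; rewrite fiE.
by exfalso; apply: nT; exists i.
Qed.
HB.instance Definition _ :=
  isOpenTopological.Build antidisc2 anti_opT anti_opI anti_op_bigU.

Definition pointa := unit.
HB.instance Definition _ := Choice.on pointa.
Definition pointa_open : set_system pointa := fun U => U = set0 \/ U = setT.
Lemma pointa_opT : pointa_open setT. Proof. by right. Qed.
Lemma pointa_opI : setI_closed pointa_open.
Proof.
move=> U V [->|->] [->|->]; rewrite ?set0I ?setI0 ?setIT ?setTI;
  first [by left|by right].
Qed.
Lemma pointa_op_bigU (I : Type) (f : I -> set pointa) :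
  (forall i, pointa_open (f i)) -> pointa_open (\bigcup_i f i).
Proof.
move=> fo; have [[i fi]|nT] := pselect (exists i, f i = setT).
  by right; apply/seteqP; split=> // x _; exists i => //; rewrite fi.
left; apply/seteqP; split=> // x [i _ fx]; case: (fo i) => fiE.
  by move: fx; rewrite fiE.
by exfalso; apply: nT; exists i.
Qed.
HB.instance Definition _ :=
  isOpenTopological.Build pointa pointa_opT pointa_opI pointa_op_bigU.

(* the Sierpinski space S = {o, c}, with o := true, c := false;
   open sets: set0, [set o], setT *)
Definition sierp := bool.
HB.instance Definition _ := Choice.on sierp.
Definition sierp_open : set_system sierp :=
  fun U => [\/ U = set0, U = [set true] | U = setT].
Lemma sierp_opT : sierp_open setT. Proof. by apply: Or33. Qed.
Lemma sierp_opI : setI_closed sierp_open.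
Proof.
move=> U V [->|->|->] [->|->|->]; rewrite ?set0I ?setI0 ?setIT ?setTI ?setIid;
  first [by apply: Or31|by apply: Or32|by apply: Or33].
Qed.
Lemma sierp_op_bigU (I : Type) (f : I -> set sierp) :
  (forall i, sierp_open (f i)) -> sierp_open (\bigcup_i f i).
Proof.
move=> fo; have [[i fi]|nT] := pselect (exists i, f i = setT).
  by apply: Or33; apply/seteqP; split=> // x _; exists i => //; rewrite fi.
have [[i fi]|nO] := pselect (exists i, f i = [set true]).
  apply: Or32; apply/seteqP; split=> x.
    case=> j _ fjx; case: (fo j) => fjE; move: fjx; rewrite fjE //.
    by move=> _; exfalso; apply: nT; exists j.
  by move=> ->; exists i => //; rewrite fi.
apply: Or31; apply/seteqP; split=> // x [j _ fjx]; case: (fo j) => fjE.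
- by move: fjx; rewrite fjE.
- by exfalso; apply: nO; exists j.
- by exfalso; apply: nT; exists j.
Qed.
HB.instance Definition _ :=
  isOpenTopological.Build sierp sierp_opT sierp_opI sierp_op_bigU.

Definition iota_map : emptysp -> pointsp := fun v => match v with end.
Definition m_incl : pointa -> antidisc2 := fun _ => true.
Definition sigma : sierp -> pointsp := fun _ => tt.
Definition e_map : antidisc2 -> pointsp := fun _ => tt.

Definition induced_surj : mclass := fun A B p =>
  [/\ continuous p, (forall y : B, exists x : A, p x = y) &
      forall U : set A, open U -> exists V : set B, open V /\ U = p @^-1` V].

(* Main.v *)
Require Import Defs.
From mathcomp Require Import all_boot all_order.
From mathcomp Require Import all_classical all_reals all_analysis.

Set Implicit Arguments.
Unset Strict Implicit.
Unset Printing Implicit Defensive.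

Local Open Scope classical_set_scope.

Lemma sing_trans (A B X Y C D : topologicalType) (f : A -> B) (h : X -> Y)
  (g : C -> D) : sing h g -> lifts f h -> lifts f g.
Proof.
rewrite /sing => E.
pose Q := fun z : {AB : topologicalType * topologicalType & AB.1 -> AB.2} =>
  lifts f (projT2 z).
change (Q (existT _ (X, Y) h) -> Q (existT _ (C, D) g)).
by rewrite -E.
Qed.

Lemma lcl_sing (X Y : topologicalType) (h : X -> Y) (A B : topologicalType)
  (f : A -> B) : continuous f -> lifts f h -> lcl (sing h) f.
Proof. move=> cf lh; split=> // C D g _ sg; exact: sing_trans sg lh. Qed.

Lemma lcl_sing_inv (X Y : topologicalType) (h : X -> Y) (A B : topologicalType)
  (f : A -> B) : continuous h -> lcl (sing h) f -> lifts f h.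
Proof. move=> ch [_ H]; exact: (H _ _ h ch erefl). Qed.

Lemma anti_cont (X : topologicalType) (h : X -> antidisc2) : continuous h.
Proof.
apply/continuousP => U [->|->].
  by rewrite preimage_set0; exact: open0.
by rewrite preimage_setT; exact: openT.
Qed.

Lemma empty_cont (X Y : topologicalType) (h : X -> Y) :
  (X -> False) -> continuous h.
Proof. by move=> nX x; case: (nX x). Qed.

Lemma id_cont (X : topologicalType) : continuous (fun x : X => x).
Proof. by apply/continuousP => U. Qed.

Lemma comp_cont (X Y Z : topologicalType) (f : X -> Y) (g : Y -> Z) :
  continuous f -> continuous g -> continuous (g \o f).
Proof. by move=> cf cg x; apply: continuous_comp; [exact: cf|exact: cg]. Qed.

Lemma sierp_char (X : topologicalType) (V : set X) :
  open V -> continuous (fun x => `[< V x >] : sierp).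
Proof.
move=> oV; apply/continuousP => U [->|->|->].
- by rewrite preimage_set0; exact: open0.
- have -> : (fun x => `[< V x >] : sierp) @^-1` [set true] = V.
    by apply/seteqP; split => x /=; [move/asboolP|move=> Vx; apply/asboolP].
  exact: oV.
- by rewrite preimage_setT; exact: openT.
Qed.

Lemma cstc {T U : topologicalType} (x : U) : continuous (fun _ : T => x).
Proof. by move=> t; apply: cvg_cst. Qed.

Definition INJ : mclass := fun A B f => continuous f /\ injective f.
Definition SPLIT : mclass := fun A B f =>
  continuous f /\ exists s : B -> A, continuous s /\ f \o s = id.

Lemma rcl_ext (P Q : mclass) :
  (forall (A B : topologicalType) (f : A -> B), P A B f <-> Q A B f) ->
  forall (C D : topologicalType) (g : C -> D), rcl P g <-> rcl Q g.
Proof.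
move=> PQ C D g; split=> -[cg H]; split=> // A B f cf /PQ Pf; exact: H.
Qed.
Arguments lcl_sing_inv [X Y h A B f] _ _ t b.

Lemma lcl_e (A B : topologicalType) (f : A -> B) :
  lcl (sing e_map) f <-> INJ f.
Proof.
have ce : continuous e_map by move=> x; apply: cstc.
split.
  move=> L; have [cf _] := L; split=> // a1 a2 E.
  have := lcl_sing_inv ce L (fun a => `[< a = a1 >] : antidisc2) (fun _ => tt)
    (@anti_cont _ _) (@cstc _ _ _) erefl.
  case=> d [_ df _].
  have h1 := congr1 (fun k => k a1) df; have h2 := congr1 (fun k => k a2) df.
  move: h1 h2 => /= h1 h2; rewrite -E h1 in h2.
  have : `[< a2 = a1 >] by rewrite -h2; apply/asboolP.
  by move/asboolP.
move=> [cf finj]; apply: lcl_sing => // t b ct cb E.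
exists (fun y => `[< exists2 a, f a = y & t a >] : antidisc2); split.
- exact: (@anti_cont _ _).
- apply: funext => a /=; case Ht: (t a).
    by apply/asboolP; exists a.
  apply/negbTE/asboolPn => -[a' /finj ->]; by rewrite Ht.
- by apply: funext => y /=; case: (b y).
Qed.

Lemma rcl_INJ (C D : topologicalType) (g : C -> D) :
  rcl INJ g <-> induced_surj g.
Proof.
split.
  move=> [cg H]; split=> //.
    move=> y.
    have Iem : INJ (fun v : emptysp => match v with end : pointsp).
      by split; [case|case].
    have := H _ _ _ (proj1 Iem) Iem (fun v : emptysp => match v with end : C)
      (fun _ : pointsp => y) ltac:(by case) (@cstc _ _ _) (funext (fun v : emptysp => match v with end)).
    case=> d [_ _ gd]; exists (d tt).
    exact: (congr1 (fun k => k tt) gd).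
  move=> U oU.
  pose W := initial_topology g.
  have cgW : continuous (g : W -> D) by exact: initial_continuous.
  have cid : continuous (fun x : C => x : W).
    move/continuousP: cg => cg.
    by apply/continuousP => V [V' oV' <-]; apply: cg.
  have IW : INJ (fun x : C => x : W) by split.
  have [d [cd df gd]] := H _ _ _ cid IW (fun x : C => x) (g : W -> D)
    (@id_cont _) cgW erefl.
  have dE : d = (fun x => x) :> (W -> C).
    by apply: funext => x; exact: (congr1 (fun k => k x) df).
  move/continuousP: cd => cd.
  have := cd U oU; rewrite dE => -[V oV E].
  by exists V; split => //; rewrite E.
move=> [cg surj ind]; split=> // A B f cf [_ finj] t b ct cb E.
have ex y : exists c : C, g c = b y /\ (forall a, f a = y -> c = t a).
  case: (pselect (exists a, f a = y)) => [[a fa]|nE].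
    exists (t a); split.
      by rewrite -fa; exact: (congr1 (fun k => k a) E).
    by move=> a' fa'; rewrite -fa in fa'; rewrite (finj _ _ fa').
  have [c gc] := surj (b y); exists c; split => // a fa.
  by exfalso; apply: nE; exists a.
pose d y := proj1_sig (cid (ex y)).
have dP y : g (d y) = b y /\ (forall a, f a = y -> d y = t a).
  exact: (proj2_sig (cid (ex y))).
exists d; split.
- apply/continuousP => U oU.
  have [V [oV ->]] := ind U oU.
  have -> : d @^-1` (g @^-1` V) = b @^-1` V.
    by apply/seteqP; split => y /=; rewrite (proj1 (dP y)).
  by move/continuousP: cb; apply.
- by apply: funext => a /=; apply: (proj2 (dP (f a))).
- by apply: funext => y /=; apply: (proj1 (dP y)).
Qed.

Lemma ci : continuous iota_map. Proof. by case. Qed.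

Lemma L1_ne (A B : topologicalType) (f : A -> B) :
  continuous f -> A -> lcl (sing iota_map) f.
Proof. move=> cf a0; apply: lcl_sing => // t b _ _ _; case: (t a0). Qed.

Lemma L1_empty (A B : topologicalType) (f : A -> B) :
  lcl (sing iota_map) f -> (A -> False) -> B -> False.
Proof.
move=> L nA y.
have := lcl_sing_inv ci L (fun a => match nA a with end) (fun _ => tt)
  (@empty_cont _ _ _ nA) (@cstc _ _ _)
  (funext (fun a => match nA a with end)).
by case=> d _; case: (d y).
Qed.

Lemma R2 (C D : topologicalType) (g : C -> D) :
  rcl (rcl (lcl (sing iota_map))) g <-> SPLIT g.
Proof.
split.
  move=> [cg H]; split=> //.
  pose em := fun v : emptysp => match v with end : D.
  have Rem : rcl (lcl (sing iota_map)) em.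
    split; first by case.
    move=> A' B' h ch Lh t b ct cb E.
    have nA : A' -> False := fun a => match t a with end.
    have nB := L1_empty Lh nA.
    exists (fun y => match nB y with end); split.
    - exact: empty_cont.
    - by apply: funext => a; case: (nA a).
    - by apply: funext => y; case: (nB y).
  have := H _ _ em ltac:(by case) Rem (fun v => match v with end) id ltac:(by case)
    (@id_cont _) (funext (fun v : emptysp => match v with end)).
  by case=> s [cs _ gs]; exists s.
move=> [cg [s [cs gs]]]; split=> // A B f cf Hf t b ct cb E.
have [cf' Hf'] := Hf.
case: (pselect (exists a : A, True)) => [[a0 _]|nA].
  have Lf := L1_ne cf a0.
  have [d0 [cd0 d0f fd0]] := Hf' A B f cf Lf (fun x => x) (fun x => x)
    (@id_cont _) (@id_cont _) erefl.
  exists (t \o d0); split.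
  - exact: comp_cont.
  - apply: funext => a /=.
    by have := congr1 (fun k => k a) d0f => /= ->.
  - apply: funext => y /=.
    have := congr1 (fun k => k (d0 y)) E => /= ->.
    by have := congr1 (fun k => k y) fd0 => /= ->.
exists (s \o b); split.
- exact: comp_cont.
- by apply: funext => a; exfalso; apply: nA; exists a.
- by apply: funext => y /=; exact: (congr1 (fun k => k (b y)) gs).
Qed.

Lemma R3 (C D : topologicalType) (g : C -> D) :
  rcl SPLIT g <-> INJ g.
Proof.
split.
  move=> [cg H]; split=> // c1 c2 E.
  have Sf : SPLIT (fun _ : bool => tt : pointsp).
    split; first exact: cstc.
    exists (fun _ => true); split; first exact: cstc.
    by apply: funext => -[].
  have ct : continuous (fun x : bool => if x then c1 else c2).
    by apply/continuousP => U _; apply: discrete_open.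
  have := H _ _ _ (proj1 Sf) Sf (fun x : bool => if x then c1 else c2)
    (fun _ : pointsp => g c1) ct (@cstc _ _ _)
    (funext (fun x => if x as x0 return
       g (if x0 then c1 else c2) = g c1 then erefl else esym E)).
  case=> d [_ df _].
  have h1 := congr1 (fun k => k true) df; have h2 := congr1 (fun k => k false) df.
  by move: h1 h2 => /= <- <-.
move=> [cg ginj]; split=> // A B f cf [_ [s [cs fs]]] t b ct cb E.
exists (t \o s); split.
- exact: comp_cont.
- apply: funext => a /=; apply: ginj.
  have := congr1 (fun k => k (s (f a))) E => /= ->.
  have := congr1 (fun k => k (f a)) fs => /= ->.
  by have := congr1 (fun k => k a) E => /= ->.
- apply: funext => y /=.
  have := congr1 (fun k => k (s y)) E => /= ->.
  by have := congr1 (fun k => k y) fs => /= ->.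
Qed.

Lemma lcl_pair (A B : topologicalType) (f : A -> B) :
  lcl (pair_cl m_incl sigma) f <-> induced_surj f.
Proof.
have cm : continuous m_incl by move=> x; apply: cstc.
have cs : continuous sigma by move=> x; apply: cstc.
split.
  move=> [cf H].
  have Lm : lifts f m_incl := H _ _ m_incl cm (or_introl erefl).
  have Ls : lifts f sigma := H _ _ sigma cs (or_intror erefl).
  split=> //.
    move=> y; case: (pselect (exists x, f x = y)) => // nE.
    pose bb := fun z : B => `[< z <> y >] : antidisc2.
    have Ebb : m_incl \o (fun _ : A => tt : pointa) = bb \o f.
      apply: funext => a /=; apply/esym/asboolP => fay; apply: nE; by exists a.
    have [d [_ _ md]] := Lm _ bb (@cstc _ _ _) (@anti_cont _ _) Ebb.
    have := congr1 (fun k => k y) md => /= /esym /asboolP.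
    by [].
  move=> U oU.
  have [d [cd df _]] := Ls (fun x => `[< U x >] : sierp) (fun _ => tt)
    (sierp_char oU) (@cstc _ _ _) erefl.
  exists (d @^-1` [set true]); split.
    move/continuousP: cd; apply.
    change (sierp_open [set true]); exact: Or32.
  apply/seteqP; split => x /=; have := congr1 (fun k => k x) df => /= ->.
    by move=> Ux; apply/asboolP.
  by move/asboolP.
move=> [cf surj ind]; split=> // C D g cg [Hm|Hs].
  apply: (sing_trans Hm) => t bb ct cb E.
  exists (fun _ => tt : pointa); split.
  - exact: cstc.
  - by apply: funext => a /=; case: (t a).
  - apply: funext => y /=; have [a <-] := surj y.
    exact: (congr1 (fun k => k a) E).
apply: (sing_trans Hs) => t b ct cb E.
have oU : open (t @^-1` [set true]).
  move/continuousP: ct; apply.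
  change (sierp_open [set true]); exact: Or32.
have [V [oV UV]] := ind _ oU.
exists (fun y => `[< V y >] : sierp); split.
- exact: sierp_char.
- apply: funext => a /=; case Ht: (t a).
    apply/asboolP.
    have : (t @^-1` [set true]) a by [].
    by rewrite UV.
  apply/negbTE/asboolPn => Vfa.
  have : (t @^-1` [set true]) a by rewrite UV.
  by rewrite /= Ht.
- by apply: funext => y /=; case: (b y).
Qed.


Theorem mainTheorem19 :
  forall (A B : topologicalType) (p : A -> B),
    (rcl (rcl (rcl (rcl (lcl (sing iota_map))))) p <-> lcl (pair_cl m_incl sigma) p) /\
    (lcl (pair_cl m_incl sigma) p <-> rcl (lcl (sing e_map)) p) /\
    (rcl (lcl (sing e_map)) p <-> induced_surj p).
Proof.
move=> A B p.
have e1 : rcl (lcl (sing e_map)) p <-> induced_surj p.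
  exact: (iff_trans (rcl_ext lcl_e p) (rcl_INJ p)).
have e0 : rcl (rcl (rcl (rcl (lcl (sing iota_map))))) p <-> induced_surj p.
  apply: (iff_trans _ (rcl_INJ p)); apply: rcl_ext => C D g.
  exact: (iff_trans (rcl_ext R2 g) (R3 g)).
have e2 := lcl_pair p.
split; first exact: (iff_trans e0 (iff_sym e2)).
split; first exact: (iff_trans e2 (iff_sym e1)).
exact: e1.
Qed.
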